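(* Let $d\ge1$, $k\ge1$, and let $H$ be a balanced hypergraph of discrete $d$-intervals on the ground set $[k]=\{1,\dots,k\}$. Then $H$ contains a matching $M$ with $\sum_{m\in M}|m|\ge \frac{k}{2d}$.
   Context: A discrete $d$-interval on $[k]$ (with its natural linear order) is a union of at most $d$ pairwise disjoint nonempty sets of consecutive integers in $[k]$. A hypergraph of discrete $d$-intervals on $[k]$ is a finite family of such sets, regarded as a hypergraph on vertex set $[k]$. $H$ is balanced if there is $f:H\to\mathbb{R}_{\ge0}$ with $\sum_{h\ni v}f(h)=1$ for every $v\in[k]$. A matching is a set of pairwise disjoint edges. *)

(* Defs.v *)
(* Ground set [k] is modelled by 'I_k = {0,...,k-1} with the
   natural order inherited from nat. *)
From HB Require Import structures.
From mathcomp Require Import all_boot all_order all_algebra.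
Set Implicit Arguments. Unset Strict Implicit. Unset Printing Implicit Defensive.
Import Order.TTheory GRing.Theory Num.Theory.

Definition is_interval (k : nat) (I : {set 'I_k}) : Prop :=
  I != set0 /\
  forall x y z : 'I_k, x \in I -> z \in I -> (x <= y <= z)%N -> y \in I.

Definition d_interval (k d : nat) (h : {set 'I_k}) : Prop :=
  exists s : seq {set 'I_k},
    (size s <= d)%N /\
    (forall I, I \in s -> is_interval I) /\
    (forall i j, (i < size s)%N -> (j < size s)%N -> i <> j ->
       [disjoint nth set0 s i & nth set0 s j]) /\
    h = \bigcup_(I <- s) I.

Definition balanced (R : realFieldType) (k : nat) (H : {set {set 'I_k}}) : Prop :=
  exists f : {set 'I_k} -> R,
    (forall h, h \in H -> 0 <= f h)%R /\
    (forall v : 'I_k, (\sum_(h in H | v \in h) f h)%R = 1%R).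

Definition is_matching (k : nat) (M : {set {set 'I_k}}) : Prop :=
  forall m1 m2, m1 \in M -> m2 \in M -> m1 != m2 -> [disjoint m1 & m2].

(* Main.v *)
Require Import Defs.
From HB Require Import structures.
From mathcomp Require Import all_boot all_order all_algebra.
From mathcomp Require Import zify.
From Stdlib Require Import Lia.
From mathcomp Require Import ring lra.
Set Implicit Arguments. Unset Strict Implicit. Unset Printing Implicit Defensive.

Definition rends k (h : {set 'I_k}) : {set 'I_k} :=
  [set v in h | [forall u : 'I_k, (val u == (val v).+1) ==> (u \notin h)]].

Lemma rends_meet k (g h : {set 'I_k}) :
  ~~ [disjoint g & h] -> ~~ [disjoint g & rends h] || ~~ [disjoint h & rends g].
Proof.
case/pred0Pn => v /andP[vg vh].
have [n Hn] := ubnP (k - val v).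
elim: n v vg vh Hn => // n IH v vg vh Hn.
case Rh: (v \in rends h).
  by apply/orP; left; apply/pred0Pn; exists v; apply/andP; split.
case Rg: (v \in rends g).
  by apply/orP; right; apply/pred0Pn; exists v; apply/andP; split.
move/negbT: Rh; rewrite inE (_ : v \in h = true) //= => /forallPn [u]; rewrite negb_imply negbK => /andP[/eqP uv uh].
move/negbT: Rg; rewrite inE (_ : v \in g = true) //= => /forallPn [u']; rewrite negb_imply negbK => /andP[/eqP uv' ug].
have uu : u' = u by apply: ord_inj; exact: (etrans uv' (esym uv)).
subst u'.
apply: (IH u ug uh).
move: Hn; rewrite ltnS => Hn. have := ltn_ord u. move: uv Hn. rewrite /= => E H1 H2. rewrite E in H2 *. move: H1 H2. generalize (nat_of_ord v). intros; lia.
Qed.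

Lemma rends_interval k (I : {set 'I_k}) : is_interval I -> (#|rends I| <= 1)%N.
Proof.
case=> _ conv.
have key : forall a b, a \in rends I -> b \in rends I -> (val a <= val b)%N -> a = b.
  move=> a b aR bR ab.
  case: (ltnP a b) => [lt|ge]; last by apply: val_inj; apply/eqP; rewrite eqn_leq ab ge.
  have lt' : ((val a).+1 < k)%N by apply: leq_ltn_trans (ltn_ord b).
  set u := Ordinal lt'.
  move: aR; rewrite inE => /andP[aI /forallP /(_ u)].
  rewrite eqxx /= => uI.
  move: bR; rewrite inE => /andP[bI _].
  have : u \in I by apply: (conv a u b) => //; rewrite /= leqnSn lt.
  by rewrite (negbTE uI).
apply/card_le1_eqP => a b aR bR.
case: (leqP a b) => ab; first by apply/esym/key.
by apply: key => //; apply: ltnW.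
Qed.

Lemma card_bigcup_seq k (s : seq {set 'I_k}) (A : {set 'I_k} -> {set 'I_k}) :
  (forall I, I \in s -> #|A I| <= 1)%N -> (#|\bigcup_(I <- s) A I| <= size s)%N.
Proof.
elim: s => [|I s IH] H; first by rewrite big_nil cards0.
rewrite big_cons /=.
apply: leq_trans (leq_card_setU _ _) _.
rewrite -add1n leq_add //; first by apply: H; rewrite inE eqxx.
by apply: IH => J J_s; apply: H; rewrite inE J_s orbT.
Qed.

Lemma rends_dint k d (h : {set 'I_k}) : d_interval d h -> (#|rends h| <= d)%N.
Proof.
case=> s [sd [sI [_ hE]]].
apply: leq_trans sd.
apply: leq_trans (card_bigcup_seq (A := @rends k) _); last first.
  by move=> I /sI; apply: rends_interval.
apply: subset_leq_card; apply/subsetP => v.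
rewrite inE => /andP[vh /forallP Hv].
move: vh; rewrite hE bigcup_seq => /bigcupP [I Is vI].
rewrite bigcup_seq; apply/bigcupP; exists I => //.
rewrite inE vI /=; apply/forallP => u; apply/implyP => /eqP uv.
have un : u \notin h by apply: (implyP (Hv u)); apply/eqP. rewrite hE in un.
apply/negP => uI; move/negP: un; apply.
rewrite bigcup_seq; apply/bigcupP; by exists I.
Qed.
Import Order.TTheory GRing.Theory Num.Theory.
Local Open Scope ring_scope.

Section Real.
Variables (R : realFieldType) (k d : nat).
Implicit Types (E : {set {set 'I_k}}) (x w : {set 'I_k} -> R).

Lemma sum_sub_le E E' (P : pred {set 'I_k}) x :
  E \subset E' -> (forall g, g \in E' -> 0 <= x g) ->
  \sum_(g in E | P g) x g <= \sum_(g in E' | P g) x g.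
Proof.
move=> /subsetP sEE' hx; rewrite [X in X <= _]big_mkcond [X in _ <= X]big_mkcond /=.
apply: ler_sum => g _.
case gE: (g \in E) => /=.
  by rewrite (sEE' g gE) /=.
by case: ifP => // /andP[/hx].
Qed.

Lemma dbl E x :
  (forall g, g \in E -> 0 <= x g) ->
  (forall v, \sum_(g in E | v \in g) x g <= 1) ->
  (forall g, g \in E -> (#|rends g| <= d)%N) ->
  \sum_(h in E) x h * (\sum_(g in E | ~~ [disjoint g & h]) x g)
    <= (2 * d)%:R * \sum_(h in E) x h.
Proof.
move=> hx hcov hR.
pose a (h g : {set 'I_k}) : R := (~~ [disjoint g & rends h])%:R.
have step1 : forall h, h \in E ->
  x h * (\sum_(g in E | ~~ [disjoint g & h]) x g)
    <= \sum_(g in E) x h * x g * (a h g + a g h).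
  move=> h hE; rewrite big_mkcondr mulr_sumr /=; apply: ler_sum => g gE.
  have xhg : 0 <= x h * x g by rewrite mulr_ge0 ?hx.
  case: ifP => Hd; last by rewrite mulr0 mulr_ge0 // addr_ge0.
  rewrite -[X in X <= _]mulr1; apply: ler_wpM2l => //.
  have := rends_meet Hd; rewrite /a.
  by case: (~~ [disjoint g & rends h]); case: (~~ [disjoint h & rends g]); rewrite //= ?addr0 ?add0r ?lerDl // ler0n.
have step3 : forall h, h \in E -> \sum_(g in E) x h * x g * a h g <= x h * d%:R.
  move=> h hE.
  under eq_bigr do rewrite -mulrA.
  rewrite -mulr_sumr; apply: ler_wpM2l; first exact: hx.
  apply: (@le_trans _ _ (\sum_(g in E) x g * \sum_(v in rends h) (v \in g)%:R)).
    apply: ler_sum => g gE; apply: ler_wpM2l; first exact: hx.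
    rewrite /a; case: (boolP (~~ [disjoint g & rends h])) => [/pred0Pn [v /andP [vg vR]]|_]; last by rewrite /= sumr_ge0.
    rewrite (bigD1 v) //= (_ : (v \in g) = true) //.
    by rewrite lerDl sumr_ge0.
  under eq_bigr do rewrite mulr_sumr.
  rewrite exchange_big /=.
  apply: (@le_trans _ _ (\sum_(v in rends h) 1)); last first.
    by rewrite sumr_const -[X in _ <= X]mulr1n ler_nat hR.
  apply: ler_sum => v _.
  apply: le_trans (hcov v).
  by rewrite big_mkcondr /=; apply: ler_sum => g _; case: (v \in g); rewrite ?mulr1 ?mulr0.
apply: (@le_trans _ _ (\sum_(h in E) \sum_(g in E) x h * x g * (a h g + a g h))).
  by apply: ler_sum => h hE; apply: step1.
under eq_bigr do under eq_bigr do rewrite mulrDr.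
under eq_bigr do rewrite big_split.
rewrite big_split /=.
rewrite [X in _ + X <= _]exchange_big /=.
under [X in _ + X <= _]eq_bigr do under eq_bigr do rewrite [x _ * x _]mulrC.
apply: (@le_trans _ _ (\sum_(h in E) x h * d%:R + \sum_(h in E) x h * d%:R)).
  by apply: lerD; apply: ler_sum => h hE; apply: step3.
rewrite -mulr_suml natrM le_eqVlt; apply/orP; left; apply/eqP; ring.
Qed.

Lemma pick E x :
  (forall g, g \in E -> 0 <= x g) ->
  (forall v, \sum_(g in E | v \in g) x g <= 1) ->
  (forall g, g \in E -> (#|rends g| <= d)%N) ->
  forall h0, h0 \in E -> 0 < x h0 ->
  exists2 h, h \in E & (0 < x h) && (\sum_(g in E | ~~ [disjoint g & h]) x g <= (2 * d)%:R).
Proof.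
move=> hx hcov hR h0 h0E xh0.
case: (boolP [exists h in E, (0 < x h) && (\sum_(g in E | ~~ [disjoint g & h]) x g <= (2 * d)%:R)]).
  by case/exists_inP => h hE H; exists h.
rewrite negb_exists_in => /forall_inP Hn.
have Hn' : forall h, h \in E -> 0 < x h -> (2 * d)%:R < \sum_(g in E | ~~ [disjoint g & h]) x g.
  by move=> h hE xh; have := Hn h hE; rewrite xh /= -ltNge.
exfalso; move: (dbl hx hcov hR); rewrite mulr_sumr.
apply/negP; rewrite -ltNge.
rewrite (bigD1 h0) //= [X in _ < X](bigD1 h0) //=.
apply: ltr_leD.
  by rewrite mulrC ltr_pM2l // Hn'.
apply: ler_sum => h /andP[hE _].
have := hx h hE; rewrite le_eqVlt => /orP[/eqP <-|xh]; first by rewrite !mul0r mulr0.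
by rewrite mulrC ler_pM2l // ltW // Hn'.
Qed.

Lemma main (G : {set {set 'I_k}}) x :
  (forall g, g \in G -> 0 <= x g) ->
  (forall v, \sum_(g in G | v \in g) x g <= 1) ->
  (forall g, g \in G -> (#|rends g| <= d)%N) ->
  (forall g, g \in G -> g != set0) ->
  forall n E w, (#|E| < n)%N -> E \subset G -> (forall g, g \in E -> 0 <= w g) ->
  exists M : {set {set 'I_k}}, M \subset E /\ is_matching M /\
    \sum_(g in E) x g * w g <= (2 * d)%:R * \sum_(g in M) w g.
Proof.
move=> hx hcov hR hne n; elim: n => // n IH E w En sEG hw.
have hxE : forall g, g \in E -> 0 <= x g by move=> g /(subsetP sEG); apply: hx.
have hcovE : forall v, \sum_(g in E | v \in g) x g <= 1.
  by move=> v; apply: le_trans (hcov v); apply: sum_sub_le.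
have hRE : forall g, g \in E -> (#|rends g| <= d)%N by move=> g /(subsetP sEG); apply: hR.
case: (boolP [exists h0 in E, 0 < x h0]); last first.
  rewrite negb_exists_in => /forall_inP Hn.
  exists set0; split; first exact: sub0set.
  split; first by move=> m1 m2; rewrite inE.
  rewrite big_set0 mulr0 big1 // => g gE.
  have := hxE g gE; rewrite le_eqVlt => /orP[/eqP <-|]; first by rewrite mul0r.
  by move=> xg; move: (Hn g gE); rewrite xg.
case/exists_inP => h0 h0E xh0.
have [h hE /andP[xh Sh]] := pick hxE hcovE hRE h0E xh0.
set N := [set g in E | ~~ [disjoint g & h]].
have hN : h \in N.
  rewrite inE hE /=; have := hne h (subsetP sEG h hE).
  by case/set0Pn => v vh; apply/pred0Pn; exists v; apply/andP; split.
pose w2 g := w g - w h * (g \in N)%:R.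
set E' := [set g in E | 0 < w2 g].
have sE'E : E' \subset E by apply/subsetP => g; rewrite inE => /andP[].
have hE' : h \notin E' by rewrite inE /w2 hN mulr1 subrr ltxx andbF.
have E'n : (#|E'| < n)%N.
  have : (#|E'| <= #|E :\ h|)%N.
    apply: subset_leq_card; apply/subsetP => g gE'.
    rewrite in_setD1 (subsetP sE'E g gE') andbT; apply/eqP => gh.
    by move: hE'; rewrite -gh gE'.
  have := cardsD1 h E; rewrite hE.
  move: En; lia.
have hw2 : forall g, g \in E' -> 0 <= w2 g by move=> g; rewrite inE => /andP[_ /ltW].
have [M' [sM'E' [mM' HM']]] := IH E' w2 E'n (subset_trans sE'E sEG) hw2.
have sM'E := subset_trans sM'E' sE'E.
have Hsplit : \sum_(g in E) x g * w g =
   \sum_(g in E) x g * w2 g + w h * \sum_(g in E | ~~ [disjoint g & h]) x g.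
  rewrite big_mkcondr mulr_sumr -big_split /=; apply: eq_bigr => g gE.
  rewrite /w2 inE gE /=; case: ifP => _; rewrite ?mulr1 ?mulr0; ring.
have H2 : \sum_(g in E) x g * w2 g <= \sum_(g in E') x g * w2 g.
  rewrite [X in X <= _]big_mkcond [X in _ <= X]big_mkcond /=; apply: ler_sum => g _.
  rewrite [g \in E']inE; case gE: (g \in E) => //=.
  case: ifP => // /negbT; rewrite -leNgt => w2le.
  by rewrite mulr_ge0_le0 ?hxE.
have HM2 : \sum_(g in M') w2 g = \sum_(g in M') w g - w h * \sum_(g in M') (g \in N)%:R.
  by rewrite /w2 sumrB -mulr_sumr.
suff [M [sME [mM K]]] : exists M : {set {set 'I_k}}, M \subset E /\ is_matching M /\
    w h + \sum_(g in M') w2 g <= \sum_(g in M) w g.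
  exists M; split => //; split => //.
  rewrite Hsplit; apply: le_trans (lerD (le_trans H2 HM') (ler_wpM2l (hw h hE) Sh)) _.
  by rewrite [w h * _]mulrC -mulrDr addrC; apply: ler_wpM2l => //; exact: ler0n.
case: (boolP [exists g0 in M', g0 \in N]).
  case/exists_inP => g0 g0M g0N.
  exists M'; split => //; split => //.
  have c1 : 1 <= \sum_(g in M') (g \in N)%:R :> R.
    rewrite (bigD1 g0) //= g0N lerDl sumr_ge0 // => *; exact: ler0n.
  have := ler_peMr (hw h hE) c1.
  rewrite HM2; lra.
rewrite negb_exists_in => /forall_inP Hn.
have c0 : \sum_(g in M') (g \in N)%:R = 0 :> R.
  by rewrite big1 // => g gM; rewrite (negbTE (Hn g gM)).
have hM' : h \notin M' by apply/negP => /(subsetP sM'E') hE'2; move: hE'; rewrite hE'2.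
exists (h |: M'); split.
  by apply/subsetP => g; rewrite in_setU1 => /orP[/eqP->//|gM]; apply: (subsetP sM'E).
split; last by rewrite big_setU1 //= HM2 c0 mulr0 subr0.
have dj : forall m, m \in M' -> [disjoint m & h].
  by move=> m mM; have := Hn m mM; rewrite inE (subsetP sM'E _ mM) /= negbK.
move=> m1 m2; rewrite !in_setU1 => /orP[/eqP->|m1M] /orP[/eqP->|m2M].
- by rewrite eqxx.
- by move=> _; rewrite disjoint_sym dj.
- by move=> _; rewrite dj.
- exact: mM'.
Qed.
End Real.

Theorem corollary5p2 (R : realFieldType) (d k : nat) (H : {set {set 'I_k}}) :
  (1 <= d)%N -> (1 <= k)%N ->
  (forall h, h \in H -> d_interval d h) ->
  balanced R H ->
  exists M : {set {set 'I_k}},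
    M \subset H /\ is_matching M /\ (k <= 2 * d * \sum_(m in M) #|m|)%N.
Proof.
move=> d1 k1 hd [f [hf hsum]].
set G := [set g in H | g != set0].
have sGH : G \subset H by apply/subsetP => g; rewrite inE => /andP[].
have hx : forall g, g \in G -> (0 <= f g)%R by move=> g /(subsetP sGH); apply: hf.
have hcovG : forall v, (\sum_(g in G | v \in g) f g = 1)%R.
  move=> v; rewrite -(hsum v); apply: eq_bigl => g; rewrite inE.
  case vg: (v \in g); rewrite ?andbF ?andbT //.
  by case: (g \in H) => //=; apply/set0Pn; exists v.
have hcov : forall v, (\sum_(g in G | v \in g) f g <= 1)%R by move=> v; rewrite hcovG.
have hR : forall g, g \in G -> (#|rends g| <= d)%N.
  by move=> g /(subsetP sGH) /hd; apply: rends_dint.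
have hne : forall g, g \in G -> g != set0 by move=> g; rewrite inE => /andP[].
have [M [sMG [mM Hle]]] := @main R k d G f hx hcov hR hne #|G|.+1 G (fun g => (#|g|%:R : R))
   (ltnSn _) (subxx _) (fun _ _ => ler0n _ _).
exists M; split; first exact: subset_trans sMG sGH.
split => //.
have Hk : (\sum_(g in G) f g * #|g|%:R = k%:R :> R)%R.
  transitivity (\sum_(g in G) \sum_(v : 'I_k) f g * (v \in g)%:R)%R.
    apply: eq_bigr => g _; rewrite -mulr_sumr; congr (_ * _)%R.
    rewrite -sum1_card natr_sum big_mkcond /=; apply: eq_bigr => v _.
    by case: (v \in g).
  rewrite exchange_big /=.
  transitivity (\sum_(v : 'I_k) (1 : R))%R; last by rewrite sumr_const card_ord.
  apply: eq_bigr => v _; rewrite -[RHS](hcovG v) big_mkcondr /=.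
  by apply: eq_bigr => g _; case: (v \in g); rewrite ?mulr1 ?mulr0.
by rewrite Hk -natr_sum -natrM ler_nat in Hle.
Qed.
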